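(* Let $z,w\in H^2$ be distinct points of the hyperbolic plane and $k\in\mathbb R$. Define the square hyperbola $S_k(z,w)=\{x\in H^2 : d_H(x,z)^2-d_H(x,w)^2=k\}$. Then the endpoints on the ideal boundary of $H^2$ of $S_k(z,w)$ are the same as the endpoints of the equidistant line $S_0(z,w)=\{x\in H^2: d_H(x,z)=d_H(x,w)\}$.
   Context: $d_H$ denotes the hyperbolic distance on $H^2$. *)

(* Defs.v *)
(* concrete reals R. Upper half-plane model of H^2. *)
From Stdlib Require Import Reals.
Open Scope R_scope.

Definition arcosh (t : R) : R := ln (t + sqrt (t ^ 2 - 1)).

Definition inH2 (p : R * R) : Prop := 0 < snd p.

Definition dH (p q : R * R) : R :=
  arcosh (1 + ((fst p - fst q) ^ 2 + (snd p - snd q) ^ 2)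
              / (2 * snd p * snd q)).

Definition sq_hyperbola (k : R) (z w : R * R) (x : R * R) : Prop :=
  inH2 x /\ dH x z ^ 2 - dH x w ^ 2 = k.

Definition equidistant (z w : R * R) (x : R * R) : Prop :=
  inH2 x /\ dH x z = dH x w.

Inductive ideal_pt : Type := IFin (a : R) | IInf.

Definition cv_ideal (u : nat -> R * R) (xi : ideal_pt) : Prop :=
  match xi with
  | IFin a => Un_cv (fun n => fst (u n)) a /\ Un_cv (fun n => snd (u n)) 0
  | IInf => cv_infty (fun n => fst (u n) ^ 2 + snd (u n) ^ 2)
  end.

Definition ideal_endpoints (S : R * R -> Prop) (xi : ideal_pt) : Prop :=
  exists u : nat -> R * R, (forall n, S (u n)) /\ cv_ideal u xi.

(* Main.v *)
Require Import Defs.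
From Stdlib Require Import Reals Lra Psatz ClassicalEpsilon.
From Coquelicot Require Import Coquelicot.
Open Scope R_scope.

Lemma ln_le' x y : 0 < x -> x <= y -> ln x <= ln y.
Proof. intros Hx [H|H]. left; apply ln_increasing; auto. subst; lra. Qed.

Lemma arcosh_lb A : 1 <= A -> ln (2*A - /A) <= arcosh A.
Proof.
intros HA. unfold arcosh.
assert (Hi : 0 < /A <= 1). { split. apply Rinv_0_lt_compat; lra.
  rewrite <- Rinv_1. apply Rinv_le_contravar; lra. }
assert (HAi : A * /A = 1) by (field; lra).
assert (A - /A <= sqrt (A^2-1)).
{ rewrite <- (sqrt_pow2 (A - /A)) by nra. apply sqrt_le_1_alt. nra. }
apply ln_le'; nra.
Qed.

Lemma arcosh_ub A : 1 <= A -> arcosh A <= ln (2*A).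
Proof.
intros HA. unfold arcosh.
assert (0 <= sqrt (A^2-1)) by apply sqrt_pos.
assert (sqrt (A^2-1) <= A).
{ rewrite <- (sqrt_pow2 A) at 2 by lra. apply sqrt_le_1_alt. nra. }
apply ln_le'; nra.
Qed.

Lemma arcosh_lb2 A : 1 <= A -> ln A <= arcosh A.
Proof.
intros HA. unfold arcosh.
assert (0 <= sqrt (A^2-1)) by apply sqrt_pos.
apply ln_le'; lra.
Qed.

Lemma ln_ge0 A : 1 <= A -> 0 <= ln A.
Proof. intros. rewrite <- ln_1. apply ln_le'; lra. Qed.

Lemma arcosh_nn A : 1 <= A -> 0 <= arcosh A.
Proof. intros. pose proof (arcosh_lb2 A H). pose proof (ln_ge0 A H). lra. Qed.

Lemma key c K : 1 < c -> exists M, 0 < M /\ forall A B, 1 <= B -> c*B <= A -> M <= A ->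
  K < arcosh A ^2 - arcosh B ^2.
Proof.
intros Hc.
set (g := ln ((1+c)/2)).
assert (Hg : 0 < g). { unfold g. rewrite <- ln_1. apply ln_increasing; lra. }
assert (Hcc : 0 < c/(c-1)). { apply Rdiv_lt_0_compat; lra. }
exists (c/(c-1) + exp (K/g) + 1). split. { pose proof (exp_pos (K/g)). lra. }
intros A B HB HAB HM.
pose proof (exp_pos (K/g)).
assert (HA1 : 1 <= A) by lra.
assert (HAc : c <= A*(c-1)).
{ assert (c/(c-1) <= A) by lra.
  apply (Rmult_le_compat_r (c-1)) in H0; [|lra].
  replace (c/(c-1)*(c-1)) with c in H0 by (field; lra). lra. }
assert (Hi : 0 < /A <= 1). { split. apply Rinv_0_lt_compat; lra.
  rewrite <- Rinv_1. apply Rinv_le_contravar; lra. }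
assert (H2 : (1+c)*B <= 2*A - /A).
{ assert (c*((1+c)*B) <= c*(2*A - /A)).
  { assert (c*(2*A - /A) - (1+c)*A = A*(c-1) - c*/A) by ring. nra. }
  nra. }
pose proof (arcosh_lb A HA1) as L1.
pose proof (arcosh_ub B HB) as L2.
pose proof (arcosh_lb2 A HA1) as L3.
pose proof (arcosh_nn B HB) as L4.
assert (L5 : ln ((1+c)*B) <= ln (2*A - /A)) by (apply ln_le'; nra).
replace ((1+c)*B) with ((1+c)/2 * (2*B)) in L5 by field.
rewrite ln_mult in L5 by lra. fold g in L5.
assert (L6 : K/g < ln A).
{ rewrite <- (ln_exp (K/g)). apply ln_increasing; lra. }
assert (g * (K/g) = K) by (field; lra).
set (d1 := arcosh A) in *. set (d2 := arcosh B) in *.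
assert (d1 - d2 >= g) by lra.
assert (d1 > K/g) by lra.
nra.
Qed.

Definition U (z : R*R) (t:R) := ((t - fst z)^2 + snd z ^2)/snd z.
Definition cA (x z : R*R) := 1 + ((fst x - fst z)^2 + (snd x - snd z)^2)/(2*snd x*snd z).

Lemma Rdiv_le_0_compat a b : 0 <= a -> 0 < b -> 0 <= a/b.
Proof. intros. unfold Rdiv. apply Rmult_le_pos; auto. left; apply Rinv_0_lt_compat; auto. Qed.

Lemma dH_cA x z : dH x z = arcosh (cA x z).
Proof. reflexivity. Qed.

Lemma cA_eq x z : 0 < snd x -> 0 < snd z -> cA x z = (U z (fst x) + snd x ^2/snd z)/(2*snd x).
Proof. intros. unfold cA, U. field. lra. Qed.

Lemma U_pos z t : 0 < snd z -> 0 < U z t.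
Proof. intros. unfold U. apply Rdiv_lt_0_compat; [|lra].
pose proof (pow2_ge_0 (t - fst z)). assert (0 < snd z ^2) by (apply pow_lt; lra). lra. Qed.

Lemma cA_ge1 x z : 0 < snd x -> 0 < snd z -> 1 <= cA x z.
Proof. intros. unfold cA.
assert (0 <= ((fst x - fst z)^2 + (snd x - snd z)^2)/(2*snd x*snd z)).
{ apply Rdiv_le_0_compat. pose proof (pow2_ge_0 (fst x - fst z)). pose proof (pow2_ge_0 (snd x - snd z)). lra.
  apply Rmult_lt_0_compat; lra. } lra. Qed.

Lemma core z w c K : 0 < snd z -> 0 < snd w -> 1 < c -> exists M, 0 < M /\ forall x, 0 < snd x ->
  c*(U w (fst x) + snd x^2/snd w) <= U z (fst x) + snd x^2/snd z ->
  2*snd x*M <= U z (fst x) -> K < dH x z ^2 - dH x w ^2.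
Proof.
intros Hz Hw Hc. destruct (key c K Hc) as [M [HM HK]]. exists M; split; auto.
intros x Hx H1 H2. rewrite !dH_cA. apply HK.
- apply cA_ge1; auto.
- rewrite !cA_eq by auto. unfold Rdiv. rewrite <- Rmult_assoc.
  apply Rmult_le_compat_r; [|lra]. left; apply Rinv_0_lt_compat; lra.
- rewrite cA_eq by auto.
  assert (0 <= snd x ^2 / snd z) by (apply Rdiv_le_0_compat; nra).
  apply (Rmult_le_reg_r (2*snd x)); [lra|]. unfold Rdiv. rewrite Rmult_assoc, Rinv_l by lra. lra.
Qed.

Lemma point z w K t : 0 < snd z -> 0 < snd w -> U w t < U z t ->
  exists y0, 0 < y0 /\ forall y, 0 < y -> y <= y0 -> K < dH (t,y) z ^2 - dH (t,y) w ^2.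
Proof.
intros Hz Hw Ht.
pose proof (U_pos w t Hw). pose proof (U_pos z t Hz).
set (c := (U z t + U w t)/(2*U w t)).
assert (Hc : 1 < c). { unfold c. apply (Rmult_lt_reg_r (2*U w t)); [lra|].
  unfold Rdiv; rewrite Rmult_assoc, Rinv_l by lra. lra. }
assert (HcU : c * U w t = (U z t + U w t)/2) by (unfold c; field; lra).
destruct (core z w c K Hz Hw Hc) as [M [HM HC]].
set (d := (U z t - U w t)/2 * snd w / c).
assert (Hd : 0 < d). { unfold d. apply Rdiv_lt_0_compat; [|lra]. apply Rmult_lt_0_compat; lra. }
exists (Rmin 1 (Rmin d (U z t/(2*M)))).
split. { apply Rmin_glb_lt; [lra|]. apply Rmin_glb_lt; auto. apply Rdiv_lt_0_compat; lra. }
intros y Hy Hy0.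
assert (y <= 1) by (eapply Rle_trans; [exact Hy0| apply Rmin_l]).
assert (y <= d) by (eapply Rle_trans; [exact Hy0|]; eapply Rle_trans; [apply Rmin_r| apply Rmin_l]).
assert (y <= U z t/(2*M)) by (eapply Rle_trans; [exact Hy0|]; eapply Rle_trans; [apply Rmin_r| apply Rmin_r]).
apply HC; simpl; auto.
- assert (Hyy : y^2 <= d) by nra.
  assert (c * (y^2/snd w) <= (U z t - U w t)/2).
  { apply (Rmult_le_reg_r (snd w / c)). apply Rdiv_lt_0_compat; lra.
    replace (c * (y ^ 2 / snd w) * (snd w / c)) with (y^2) by (field; lra).
    replace ((U z t - U w t) / 2 * (snd w / c)) with d by (unfold d; field; lra). auto. }
  assert (0 <= y^2/snd z) by (apply Rdiv_le_0_compat; nra).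
  rewrite Rmult_plus_distr_l. lra.
- apply (Rmult_le_compat_l (2*M)) in H3; [|lra].
  replace (2*M*(U z t/(2*M))) with (U z t) in H3 by (field; lra). lra.
Qed.

Lemma dH_nn x z : 0 < snd x -> 0 < snd z -> 0 <= dH x z.
Proof. intros. rewrite dH_cA. apply arcosh_nn. apply cA_ge1; auto. Qed.

Lemma cpt (f : R -> R) x : ex_derive f x -> continuity_pt f x.
Proof. intros. apply continuity_pt_filterlim. apply (ex_derive_continuous (V:=R_NormedModule) f). auto. Qed.

Lemma ev (u : nat -> R) l : Un_cv u l -> 0 < l -> exists N, forall n, (n >= N)%nat -> 0 < u n.
Proof. intros H Hl. destruct (H l Hl) as [N HN]. exists N. intros n Hn.
specialize (HN n Hn). unfold R_dist in HN. apply Rabs_def2 in HN. lra. Qed.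

Lemma nec1 z w k a (u : nat -> R*R) : 0 < snd z -> 0 < snd w ->
  (forall n, sq_hyperbola k z w (u n)) -> Un_cv (fun n => fst (u n)) a ->
  Un_cv (fun n => snd (u n)) 0 -> U w a < U z a -> False.
Proof.
intros Hz Hw Hu Hx Hy Ha.
pose proof (U_pos w a Hw) as Pw. pose proof (U_pos z a Hz) as Pz.
set (c := (U z a + U w a)/(2*U w a)).
assert (Hc : 1 < c). { unfold c. apply (Rmult_lt_reg_r (2*U w a)); [lra|].
  unfold Rdiv; rewrite Rmult_assoc, Rinv_l by lra. lra. }
assert (HcU : c * U w a = (U z a + U w a)/2) by (unfold c; field; lra).
destruct (core z w c k Hz Hw Hc) as [M [HM HC]].
set (G := fun t => U z t - c*U w t).
set (H := fun s => s^2/snd z - c*(s^2/snd w)).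
assert (HG : Un_cv (fun n => G (fst (u n)) + H (snd (u n))) (G a + H 0)).
{ apply CV_plus; apply continuity_seq; auto; apply cpt; unfold G, H, U; auto_derive; lra. }
assert (HGa : G a + H 0 = (U z a - U w a)/2) by (unfold G, H; cbv beta; rewrite HcU; replace (0^2) with 0 by (simpl; lra); unfold Rdiv; rewrite !Rmult_0_l, Rmult_0_r; lra).
rewrite HGa in HG.
set (q := fun t => U z t). set (r := fun s => - (2*M*s)).
assert (Hq : Un_cv (fun n => q (fst (u n)) + r (snd (u n))) (q a + r 0)).
{ apply CV_plus; apply continuity_seq; auto; apply cpt; unfold q, r, U; auto_derive; lra. }
assert (Hqa : q a + r 0 = U z a) by (unfold q, r; cbv beta; ring).
rewrite Hqa in Hq.
destruct (ev _ _ HG) as [N1 H1]. lra.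
destruct (ev _ _ Hq) as [N2 H2]. lra.
specialize (H1 (max N1 N2) (Nat.le_max_l _ _)).
specialize (H2 (max N1 N2) (Nat.le_max_r _ _)).
destruct (Hu (max N1 N2)) as [Hin Hk].
unfold G, H, q, r in *.
assert (k < dH (u (max N1 N2)) z ^ 2 - dH (u (max N1 N2)) w ^ 2).
{ apply HC; auto. lra. lra. }
lra.
Qed.

Lemma cont_h0 (z1 z2 y : R) : 0 < y -> 0 < z2 -> y <> z2 ->
  forall t, continuity_pt (fun t => dH (t, y) (z1, z2) ^ 2) t.
Proof.
intros Hy Hz Hyz t. apply continuity_pt_filterlim.
apply (ex_derive_continuous (V:=R_NormedModule) (fun t => dH (t, y) (z1, z2) ^ 2)).
unfold dH, arcosh; simpl. auto_derive.
set (Q := ((t + - z1) * ((t + - z1) * 1) + (y - z2) * ((y - z2) * 1)) * / (2 * y * z2)).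
assert (0<Q). { unfold Q. apply Rmult_lt_0_compat.
  assert (0 < (y-z2)*(y-z2)). { destruct (Rlt_or_le y z2). nra. assert (y > z2) by lra. nra. }
  pose proof (Rle_0_sqr (t + - z1)). unfold Rsqr in *. lra.
  apply Rinv_0_lt_compat. apply Rmult_lt_0_compat; lra. }
pose proof (sqrt_pos ((1+Q)*((1+Q)*1) + -(1))). repeat split; nra.
Qed.

Lemma cont_h z y : 0 < y -> 0 < snd z -> y <> snd z ->
  forall t, continuity_pt (fun t => dH (t, y) z ^ 2) t.
Proof. destruct z as [z1 z2]. simpl. apply cont_h0. Qed.

Lemma build z w k tp tn eps : 0 < snd z -> 0 < snd w -> 0 < eps ->
  U w tp < U z tp -> U z tn < U w tn ->
  exists x, sq_hyperbola k z w x /\ Rmin tp tn <= fst x <= Rmax tp tn /\ snd x < eps.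
Proof.
intros Hz Hw He Hp Hn.
destruct (point z w (Rabs k) tp Hz Hw Hp) as [y1 [Hy1 P1]].
destruct (point w z (Rabs k) tn Hw Hz Hn) as [y2 [Hy2 P2]].
set (y := Rmin (Rmin y1 y2) (Rmin (eps/2) (Rmin (snd z) (snd w) /2))).
assert (Hy : 0 < y).
{ unfold y. apply Rmin_glb_lt. apply Rmin_glb_lt; auto. apply Rmin_glb_lt. lra.
  unfold Rmin; destruct Rle_dec; lra. }
assert (Hy1' : y <= y1) by (unfold y; eapply Rle_trans; [apply Rmin_l|apply Rmin_l]).
assert (Hy2' : y <= y2) by (unfold y; eapply Rle_trans; [apply Rmin_l|apply Rmin_r]).
assert (Hye : y <= eps/2) by (unfold y; eapply Rle_trans; [apply Rmin_r|apply Rmin_l]).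
assert (Hyzw : y <= Rmin (snd z) (snd w)/2) by (unfold y; eapply Rle_trans; [apply Rmin_r|apply Rmin_r]).
assert (Hyz : y < snd z) by (unfold Rmin in Hyzw; destruct Rle_dec in Hyzw; lra).
assert (Hyw : y < snd w) by (unfold Rmin in Hyzw; destruct Rle_dec in Hyzw; lra).
set (g := fun t => dH (t,y) z ^2 - dH (t,y) w ^2 - k).
assert (Hg : continuity g).
{ intro t. unfold g. apply continuity_pt_minus. apply continuity_pt_minus.
  apply cont_h; lra. apply cont_h; lra. apply continuity_pt_const. intros u v; reflexivity. }
specialize (P1 y Hy Hy1'). specialize (P2 y Hy Hy2').
pose proof (Rle_abs k). pose proof (Rle_abs (-k)). rewrite Rabs_Ropp in *.
assert (Gp : 0 < g tp) by (unfold g; lra).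
assert (Gn : g tn < 0) by (unfold g; lra).
assert (Hex : exists t, Rmin tp tn <= t <= Rmax tp tn /\ g t = 0).
{ destruct (Rlt_or_le tn tp) as [Hlt|Hle].
  - destruct (IVT g tn tp Hg Hlt Gn Gp) as [t [Ht Ht0]]. exists t. split; auto.
    unfold Rmin, Rmax; destruct Rle_dec; lra.
  - destruct Hle as [Hlt|Heq]; [|subst; lra].
    destruct (IVT (fun t => - g t) tp tn) as [t [Ht Ht0]]; auto.
    apply continuity_opp; auto. lra. lra.
    exists t. split. unfold Rmin, Rmax; destruct Rle_dec; lra. lra. }
destruct Hex as [t [Ht Ht0]].
exists (t, y). split; [|simpl; split; auto; lra].
split. unfold inH2; simpl; lra. unfold g in Ht0. lra.
Qed.

Lemma suf_eps z w k a : 0 < snd z -> 0 < snd w -> z <> w -> U z a = U w a ->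
  forall eps, 0 < eps -> exists x, sq_hyperbola k z w x /\ Rabs (fst x - a) < eps /\ snd x < eps.
Proof.
intros Hz Hw Hzw Ha eps He.
set (be := 2*(a - fst z)/snd z - 2*(a - fst w)/snd w).
set (al := /snd z - /snd w).
assert (HD : forall h, U z (a+h) - U w (a+h) = h*(be + al*h)).
{ intro h. assert (U z (a+h) - U w (a+h) = (U z a - U w a) + h*(be + al*h)).
  { unfold U, be, al. field. split; lra. }
  rewrite Ha in H. lra. }
assert (Hbe : be <> 0).
{ intro Hb. apply Hzw.
  set (r := (a - fst z)/snd z).
  assert (e1 : a - fst z = r * snd z) by (unfold r; field; lra).
  assert (e2 : a - fst w = r * snd w).
  { assert ((a - fst w)/snd w = r).
    { unfold be in Hb. unfold r.
      assert (2*((a - fst z)/snd z - (a - fst w)/snd w) = 0) by (rewrite <- Hb; field; split; lra).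
      lra. }
    rewrite <- H. field. lra. }
  assert (Uz : U z a = (r^2+1)*snd z) by (unfold U; rewrite e1; field; lra).
  assert (Uw : U w a = (r^2+1)*snd w) by (unfold U; rewrite e2; field; lra).
  assert (snd z = snd w).
  { rewrite Uz, Uw in Ha. apply Rmult_eq_reg_l in Ha; auto.
    pose proof (pow2_ge_0 r). lra. }
  assert (fst z = fst w) by (rewrite H in e1; lra).
  destruct z, w; simpl in *; subst; reflexivity. }
assert (Hab : 0 < Rabs be) by (apply Rabs_pos_lt; auto).
pose proof (Rabs_pos al) as Hal.
set (h := Rmin (eps/2) (Rabs be / (2*(Rabs al + 1)))).
assert (Hh : 0 < h). { unfold h. apply Rmin_glb_lt. lra. apply Rdiv_lt_0_compat; lra. }
assert (Hhe : h <= eps/2) by apply Rmin_l.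
assert (Hhb : h <= Rabs be / (2*(Rabs al + 1))) by apply Rmin_r.
assert (Hh2 : (Rabs al + 1)*h <= Rabs be / 2).
{ apply (Rmult_le_compat_l (Rabs al + 1)) in Hhb; [|lra].
  replace ((Rabs al + 1) * (Rabs be / (2 * (Rabs al + 1)))) with (Rabs be / 2) in Hhb by (field; lra).
  lra. }
assert (Hsq : (al*h)^2 < be^2).
{ rewrite <- (pow2_abs be), <- (pow2_abs (al*h)), Rabs_mult, (Rabs_pos_eq h) by lra.
  assert (0 <= Rabs al * h) by nra. nra. }
assert (Hprod : (U z (a+h) - U w (a+h)) * (U z (a + -h) - U w (a + -h)) < 0).
{ rewrite !HD. assert (h*(be+al*h)*(-h*(be+al*-h)) = - (h^2) * (be^2 - (al*h)^2)) by ring.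
  rewrite H. assert (0 < h^2) by nra. nra. }
assert (Hrange : forall x, Rmin (a+h) (a + -h) <= x <= Rmax (a+h) (a + -h) -> Rabs (x - a) < eps).
{ intros x Hx. unfold Rmin, Rmax in Hx. destruct Rle_dec in Hx; [lra|].
  apply Rabs_def1; lra. }
destruct (Rlt_or_le 0 (U z (a+h) - U w (a+h))) as [P|P].
- assert (U z (a + -h) - U w (a + -h) < 0) by nra.
  destruct (build z w k (a+h) (a + -h) eps Hz Hw He) as [x [Hx1 [Hx2 Hx3]]]; try lra.
  exists x; auto.
- assert (U z (a+h) - U w (a+h) < 0).
  { destruct P; auto. rewrite H in Hprod. lra. }
  assert (0 < U z (a + -h) - U w (a + -h)) by nra.
  destruct (build z w k (a + -h) (a+h) eps Hz Hw He) as [x [Hx1 [Hx2 Hx3]]]; try lra.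
  exists x. split; auto. split; auto. apply Hrange. rewrite Rmin_comm, Rmax_comm. auto.
Qed.

Lemma suf z w k a : 0 < snd z -> 0 < snd w -> z <> w -> U z a = U w a ->
  ideal_endpoints (sq_hyperbola k z w) (IFin a).
Proof.
intros Hz Hw Hzw Ha.
assert (Hn : forall n:nat, exists x, sq_hyperbola k z w x /\ Rabs (fst x - a) < / (INR n + 1) /\ snd x < / (INR n + 1)).
{ intro n. apply suf_eps; auto. apply Rinv_0_lt_compat. pose proof (pos_INR n). lra. }
set (u := fun n => proj1_sig (constructive_indefinite_description _ (Hn n))).
assert (Hu : forall n, sq_hyperbola k z w (u n) /\ Rabs (fst (u n) - a) < / (INR n + 1) /\ snd (u n) < / (INR n + 1)).
{ intro n. unfold u. destruct (constructive_indefinite_description _ (Hn n)) as [x Hx]. simpl. auto. }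
exists u. split. intro n; apply Hu.
assert (Hc : forall eps, 0 < eps -> exists N, forall n, (n >= N)%nat -> / (INR n + 1) < eps).
{ intros eps He. destruct (archimed_cor1 eps He) as [N [HN HN0]]. exists N. intros n Hn'.
  apply le_INR in Hn'. assert (0 < INR N) by (apply lt_0_INR; auto).
  eapply Rle_lt_trans; [|exact HN]. apply Rinv_le_contravar; lra. }
simpl. split.
- intros eps He. destruct (Hc eps He) as [N HN]. exists N. intros n Hn'.
  unfold R_dist. destruct (Hu n) as [_ [H1 _]]. specialize (HN n Hn'). lra.
- intros eps He. destruct (Hc eps He) as [N HN]. exists N. intros n Hn'.
  unfold R_dist. destruct (Hu n) as [[Hin _] [_ H2]]. specialize (HN n Hn').
  unfold inH2 in Hin. rewrite Rminus_0_r, Rabs_pos_eq; lra.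
Qed.

Lemma fin_iff z w k a : 0 < snd z -> 0 < snd w -> z <> w ->
  (ideal_endpoints (sq_hyperbola k z w) (IFin a) <-> U z a = U w a).
Proof.
intros Hz Hw Hzw. split; [|apply suf; auto].
intros [u [Hu [Hx Hy]]].
destruct (Rtotal_order (U z a) (U w a)) as [H|[H|H]]; auto.
- exfalso. apply (nec1 w z (-k) a u Hw Hz); auto.
  intro n. destruct (Hu n) as [H1 H2]. split; auto. lra.
- exfalso. apply (nec1 z w k a u Hz Hw); auto.
Qed.

Lemma ext (S T : R*R -> Prop) xi : (forall x, S x <-> T x) ->
  (ideal_endpoints S xi <-> ideal_endpoints T xi).
Proof. intros H. split; intros [u [Hu Hc]]; exists u; split; auto; intro n; apply H; auto. Qed.

Lemma eq_sq0 z w x : 0 < snd z -> 0 < snd w -> (equidistant z w x <-> sq_hyperbola 0 z w x).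
Proof.
intros Hz Hw. unfold equidistant, sq_hyperbola, inH2. split; intros [H1 H2]; split; auto.
- rewrite H2. lra.
- pose proof (dH_nn x z H1 Hz). pose proof (dH_nn x w H1 Hw).
  assert ((dH x z - dH x w)*(dH x z + dH x w) = 0) by lra.
  apply Rmult_integral in H3. destruct H3; nra.
Qed.

Definition iota (p : R*R) : R*R :=
  (- fst p / (fst p ^2 + snd p ^2), snd p / (fst p ^2 + snd p ^2)).

Lemma npos p : 0 < snd p -> 0 < fst p ^2 + snd p ^2.
Proof. intros. pose proof (pow2_ge_0 (fst p)). assert (0 < snd p ^2) by (apply pow_lt; lra). lra. Qed.

Lemma iota_H2 p : 0 < snd p -> 0 < snd (iota p).
Proof. intros. unfold iota; simpl. apply Rdiv_lt_0_compat; auto. apply npos; auto. Qed.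

Lemma iota_n p : 0 < snd p -> fst (iota p) ^2 + snd (iota p) ^2 = / (fst p ^2 + snd p ^2).
Proof. intros. pose proof (npos p H). unfold iota; simpl. field. lra. Qed.

Lemma iota_inv p : 0 < snd p -> iota (iota p) = p.
Proof.
intros H. pose proof (npos p H). pose proof (iota_n p H).
destruct p as [x y]. unfold iota at 1. rewrite H1. unfold iota; simpl in *. f_equal; field; lra.
Qed.

Lemma iota_dH x z : 0 < snd x -> 0 < snd z -> dH (iota x) (iota z) = dH x z.
Proof.
intros Hx Hz. pose proof (npos x Hx). pose proof (npos z Hz).
destruct x as [x1 x2], z as [z1 z2]. simpl in *.
unfold dH, iota; simpl. f_equal. f_equal. field. repeat split; lra.
Qed.

Lemma iota_sq k z w x : 0 < snd z -> 0 < snd w -> sq_hyperbola k z w x ->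
  sq_hyperbola k (iota z) (iota w) (iota x).
Proof.
intros Hz Hw [Hx Hk]. unfold inH2 in Hx. split. apply iota_H2; auto.
rewrite !iota_dH; auto.
Qed.

Lemma small x y eps : 0 < eps -> / (eps^2) < x^2 + y^2 -> Rabs (x / (x^2+y^2)) < eps.
Proof.
intros He Hs. set (s := x^2+y^2) in *.
assert (Hs0 : 0 < s). { eapply Rlt_trans; [|exact Hs]. apply Rinv_0_lt_compat, pow_lt; lra. }
assert (Hq : (x/s)^2 <= / s).
{ replace ((x/s)^2) with (x^2 / s * /s) by (field; lra).
  rewrite <- (Rmult_1_l (/s)) at 2. apply Rmult_le_compat_r. left; apply Rinv_0_lt_compat; lra.
  apply (Rmult_le_reg_r s); auto. unfold Rdiv. rewrite Rmult_assoc, Rinv_l by lra.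
  unfold s. assert (0 <= y^2) by apply pow2_ge_0. lra. }
assert (Hse : / s < eps ^2).
{ assert (0 < eps^2) by (apply pow_lt; lra).
  rewrite <- (Rinv_inv (eps^2)). apply Rinv_lt_contravar; auto. apply Rmult_lt_0_compat; auto.
  apply Rinv_0_lt_compat; auto. }
rewrite <- pow2_abs in Hq. pose proof (Rabs_pos (x/s)).
destruct (Rlt_or_le (Rabs (x/s)) eps); auto. nra.
Qed.

Lemma T1 k z w : 0 < snd z -> 0 < snd w -> ideal_endpoints (sq_hyperbola k z w) IInf ->
  ideal_endpoints (sq_hyperbola k (iota z) (iota w)) (IFin 0).
Proof.
intros Hz Hw [u [Hu Hc]]. exists (fun n => iota (u n)). split.
{ intro n. apply iota_sq; auto. }
simpl in *. split.
- intros eps He. destruct (Hc (/ (eps^2))) as [N HN]. exists N. intros n Hn.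
  specialize (HN n Hn). destruct (Hu n) as [Hin _]. unfold inH2 in Hin.
  unfold R_dist, iota; simpl. rewrite Rminus_0_r.
  unfold Rdiv. rewrite Ropp_mult_distr_l_reverse, Rabs_Ropp. apply small; auto.
- intros eps He. destruct (Hc (/ (eps^2))) as [N HN]. exists N. intros n Hn.
  specialize (HN n Hn). destruct (Hu n) as [Hin _]. unfold inH2 in Hin.
  unfold R_dist, iota; simpl. rewrite Rminus_0_r.
  rewrite Rplus_comm in HN |- *. apply small; auto.
Qed.

Lemma T2 k z w : 0 < snd z -> 0 < snd w ->
  ideal_endpoints (sq_hyperbola k (iota z) (iota w)) (IFin 0) ->
  ideal_endpoints (sq_hyperbola k z w) IInf.
Proof.
intros Hz Hw [v [Hv [Hx Hy]]]. exists (fun n => iota (v n)). split.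
{ intro n. rewrite <- (iota_inv z Hz), <- (iota_inv w Hw). apply iota_sq; auto; apply iota_H2; auto. }
change (cv_infty (fun n => fst (iota (v n)) ^2 + snd (iota (v n)) ^2)).
assert (Hs : Un_cv (fun n => fst (v n) * fst (v n) + snd (v n) * snd (v n)) (0*0+0*0)).
{ apply CV_plus; apply CV_mult; auto. }
replace (0*0+0*0) with 0 in Hs by lra.
intros M. set (e := / (Rabs M + 1)).
assert (He : 0 < e) by (unfold e; apply Rinv_0_lt_compat; pose proof (Rabs_pos M); lra).
destruct (Hs e He) as [N HN]. exists N. intros n Hn. specialize (HN n Hn).
destruct (Hv n) as [Hin _]. unfold inH2 in Hin.
rewrite iota_n by auto.
pose proof (npos (v n) Hin).
unfold R_dist in HN. rewrite Rminus_0_r in HN. simpl in H. rewrite Rabs_pos_eq in HN by lra.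
assert (fst (v n) ^2 + snd (v n) ^2 < e) by (simpl; lra).
assert (/ e < / (fst (v n) ^2 + snd (v n) ^2)) by (apply Rinv_lt_contravar; auto; apply Rmult_lt_0_compat; lra).
unfold e in H1. rewrite Rinv_inv in H1. pose proof (Rle_abs M). lra.
Qed.

Lemma inf_iff k z w : 0 < snd z -> 0 < snd w ->
  (ideal_endpoints (sq_hyperbola k z w) IInf <-> ideal_endpoints (sq_hyperbola k (iota z) (iota w)) (IFin 0)).
Proof. intros; split; [apply T1|apply T2]; auto. Qed.

Theorem mainTheorem2 (z w : R * R) (k : R) :
  inH2 z -> inH2 w -> z <> w ->
  forall xi : ideal_pt,
    ideal_endpoints (sq_hyperbola k z w) xi <-> ideal_endpoints (equidistant z w) xi.
Proof.
unfold inH2. intros Hz Hw Hzw xi.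
rewrite (ext _ _ xi (fun x => eq_sq0 z w x Hz Hw)).
destruct xi as [a|].
- rewrite !fin_iff; auto. reflexivity.
- assert (Hiz : 0 < snd (iota z)) by (apply iota_H2; auto).
  assert (Hiw : 0 < snd (iota w)) by (apply iota_H2; auto).
  assert (Hne : iota z <> iota w).
  { intro E. apply Hzw. rewrite <- (iota_inv z Hz), <- (iota_inv w Hw), E. reflexivity. }
  rewrite !inf_iff by auto. rewrite !fin_iff by auto. reflexivity.
Qed.
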